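(* The typed $\pi$-calculus $\pi$ terminates: if $\Gamma\vdash^{\pi}D$, then there is no infinite reduction sequence $D\to D_1\to D_2\to\cdots$.
   Context: Processes up to $\alpha$-renaming of bound names; $[z^+/y^+]D$ is capture-avoiding substitution of names. Syntax (braces $\{\ldots\}$ mark optional parts): declarations $D::=\nu x\,D\mid\nu x\,(x(y_1,\ldots,y_n).D\mid D)\mid\nu x\,(!x(y_1,\ldots,y_n).D\mid D)\mid M$; terms $M::=\overline{x}(y_1,\ldots,y_n)\mid(M\mid M)$ ($n\ge1$); evaluation contexts $E::=[\,]\mid E[\nu x\,[\,]]\mid E[\nu x\,(\{!\}x(y^+).D\mid[\,])]\mid E[[\,]\mid M]\mid E[M\mid[\,]]$; types $A::=\langle1\rangle\mid\langle A_1,\ldots,A_n\rangle$. Convention: when a declaration is placed in a term position (e.g. in a parallel composition or a context hole), its $\nu$-binders and definitions are moved outward in front (renamed apart). Structural congruence $\equiv$: least equivalence closed under $\alpha$-renaming and the operators with $\nu x_1(\{\{!\}x_1(y_1^+).D_1\mid\}\nu x_2(\{\{!\}x_2(y_2^+).D_2\mid\}D))\equiv\nu x_2(\{\{!\}x_2(y_2^+).D_2\mid\}\nu x_1(\{\{!\}x_1(y_1^+).D_1\mid\}D))$ if $x_1\notin FV(\lambda y_1^+.D_1)$ and $x_2\notin FV(\lambda y_2^+.D_2)$, and $\nu x(\{\{!\}x(y^+).D'\mid\}D)\equiv D$ if $x\notin FV(D)$. Reduction: least relation containing $E[\nu x\,(!x(y^+).D\mid E'[\overline{x}z^+])]\to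 E[\nu x\,(!x(y^+).D\mid E'[[z^+/y^+]D])]$ and $E[\nu x\,(x(y^+).D\mid E'[\overline{x}z^+])]\to E[\nu x\,(E'[[z^+/y^+]D])]$ (with $y^+,z^+$ of equal length), closed under $\equiv$. Typing ($\Gamma$ a finite map from names to types): $\Gamma\vdash^\pi\nu x\,D$ if $\Gamma,x:A\vdash^\pi D$ for some $A$; $\Gamma\vdash^\pi\nu x\,(\{!\}x(y_1,\ldots,y_n).D'\mid D)$ if $\Gamma,y_1:A_1,\ldots,y_n:A_n\vdash^\pi D'$ and $\Gamma,x:\langle A_1,\ldots,A_n\rangle\vdash^\pi D$; $\Gamma\vdash^\pi\overline{x}(y_1,\ldots,y_n)$ if $x:\langle A_1,\ldots,A_n\rangle\in\Gamma$ and $y_i:A_i\in\Gamma$ for all $i$; $\Gamma\vdash^\pi(M_1\mid M_2)$ if $\Gamma\vdash^\pi M_i$ for $i=1,2$. *)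

(* Defs.v *)
(* World: plain MathComp boot (ssrnat, seq).  Typed pi-calculus with
   declarations, de Bruijn representation of names (so processes are
   automatically taken up to alpha-renaming of bound names). *)
From mathcomp Require Import ssreflect ssrfun ssrbool eqtype ssrnat seq.

Set Implicit Arguments.
Unset Strict Implicit.
Unset Printing Implicit Defensive.

(*  terms  M ::= x<y_1,...,y_n> (n >= 1)  |  M | M                      *)
(*  Out x y ys  is  \overline{x}(y :: ys).                              *)
Inductive tm : Type :=
| Out (x : nat) (y : nat) (ys : seq nat)
| Par (M1 M2 : tm).

(*  declarations
      DNew D              = nu x D                 (x = index 0 in D)
      DDef r n B D        = nu x ({!}x(y_1,...,y_{n+1}).B | D)
                            (replicated iff r = true);
                            x = index 0 in D;
                            in the body B, y_i = index (i-1) and index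
                            n+1+k denotes the name k of the scope outside
                            the nu x (x itself is not in scope in B).                                           *)
Inductive decl : Type :=
| DNew (D : decl)
| DDef (rep : bool) (n : nat) (B : decl) (D : decl)
| DTm (M : tm).

(* Types  A ::= <1> | <A_1,...,A_n> (n >= 1).  TCh A As = <A :: As>. *)
Inductive ty : Type :=
| TOne
| TCh (A : ty) (As : seq ty).

Definition up (f : nat -> nat) (i : nat) : nat :=
  if i is k.+1 then (f k).+1 else 0.

Definition upn (k : nat) (f : nat -> nat) : nat -> nat := iter k up f.

Fixpoint ren_tm (f : nat -> nat) (M : tm) : tm :=
  match M with
  | Out x y ys => Out (f x) (f y) (map f ys)
  | Par M1 M2 => Par (ren_tm f M1) (ren_tm f M2)
  end.

Fixpoint ren_decl (f : nat -> nat) (D : decl) : decl :=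
  match D with
  | DNew D' => DNew (ren_decl (up f) D')
  | DDef r n B D' => DDef r n (ren_decl (upn n.+1 f) B) (ren_decl (up f) D')
  | DTm M => DTm (ren_tm f M)
  end.

(* Placing a declaration in a term position: its binders/definitions    *)
(* are moved outward in front (the sibling term is shifted, i.e.        *)
(* renamed apart).                                                      *)
Fixpoint par_l (D : decl) (M : tm) : decl :=
  match D with
  | DNew D' => DNew (par_l D' (ren_tm succn M))
  | DDef r n B D' => DDef r n B (par_l D' (ren_tm succn M))
  | DTm M' => DTm (Par M' M)
  end.

Fixpoint par_r (M : tm) (D : decl) : decl :=
  match D with
  | DNew D' => DNew (par_r (ren_tm succn M) D')
  | DDef r n B D' => DDef r n B (par_r (ren_tm succn M) D')
  | DTm M' => DTm (Par M M')
  end.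

(* Evaluation contexts
     E ::= [] | E[nu x []] | E[nu x ({!}x(y+).D | [])] | E[[] | M] | E[M | []]
   represented as the list of layers from the outermost to the
   innermost one.  Each layer's data lives in the scope of that layer. *)
Inductive layer : Type :=
| LNew
| LDef (rep : bool) (n : nat) (B : decl)
| LParL (M : tm)
| LParR (M : tm).

Definition ectx := seq layer.

Definition fill_layer (l : layer) (D : decl) : decl :=
  match l with
  | LNew => DNew D
  | LDef r n B => DDef r n B D
  | LParL M => par_l D M
  | LParR M => par_r M D
  end.

Fixpoint plug (E : ectx) (D : decl) : decl :=
  match E with
  | [::] => D
  | l :: E' => fill_layer l (plug E' D)
  end.

Fixpoint depth (E : ectx) : nat :=
  match E with
  | [::] => 0
  | LNew :: E' => (depth E').+1
  | LDef _ _ _ :: E' => (depth E').+1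
  | _ :: E' => depth E'
  end.

Inductive binder : Type :=
| BNew
| BDef (rep : bool) (n : nat) (B : decl).

Definition bind (b : binder) (D : decl) : decl :=
  match b with
  | BNew => DNew D
  | BDef r n B => DDef r n B D
  end.

Definition ren_binder (f : nat -> nat) (b : binder) : binder :=
  match b with
  | BNew => BNew
  | BDef r n B => BDef r n (ren_decl (upn n.+1 f) B)
  end.

Definition swap01 (i : nat) : nat :=
  match i with 0 => 1 | 1 => 0 | _ => i end.

Inductive scong : decl -> decl -> Prop :=
| SC_refl D : scong D D
| SC_sym D1 D2 : scong D1 D2 -> scong D2 D1
| SC_trans D1 D2 D3 : scong D1 D2 -> scong D2 D3 -> scong D1 D3
(* nu x1 (b1 | nu x2 (b2 | D)) == nu x2 (b2 | nu x1 (b1 | D)), where the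
   definition body of b2 does not mention x1 (it is the shift of a body
   in the outer scope), the body of b1 gets shifted under x2, and x1,x2
   are exchanged in D *)
| SC_swap b1 b2 D :
    scong (bind b1 (bind (ren_binder succn b2) D))
          (bind b2 (bind (ren_binder succn b1) (ren_decl swap01 D)))
(* nu x ({{!}x(y+).D' |} D) == D   if x not free in D *)
| SC_gc b D : scong (bind b (ren_decl succn D)) D
| SC_new D1 D2 : scong D1 D2 -> scong (DNew D1) (DNew D2)
| SC_defB r n B1 B2 D : scong B1 B2 -> scong (DDef r n B1 D) (DDef r n B2 D)
| SC_defC r n B D1 D2 : scong D1 D2 -> scong (DDef r n B D1) (DDef r n B D2)
| SC_parl D1 D2 M : scong D1 D2 -> scong (par_l D1 M) (par_l D2 M)
| SC_parr M D1 D2 : scong D1 D2 -> scong (par_r M D1) (par_r M D2).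

(* [z+/y+]B placed at the hole of E', where the defined name x is at    *)
(* index d = depth E'.                                                   *)
Definition inst (n : nat) (B : decl) (d : nat) (zs : seq nat) : decl :=
  ren_decl (fun i => if i < n.+1 then nth 0 zs i else i - n.+1 + d.+1) B.

Inductive step : decl -> decl -> Prop :=
| St_rep E E' n B z zs :
    size zs = n ->
    step (plug E (DDef true n B (plug E' (DTm (Out (depth E') z zs)))))
         (plug E (DDef true n B (plug E' (inst n B (depth E') (z :: zs)))))
| St_lin E E' n B z zs :
    size zs = n ->
    step (plug E (DDef false n B (plug E' (DTm (Out (depth E') z zs)))))
         (plug E (DNew (plug E' (inst n B (depth E') (z :: zs))))).

(* the least relation containing step and closed under == *)
Definition red (D D' : decl) : Prop :=
  exists D1 D2, scong D D1 /\ step D1 D2 /\ scong D2 D'.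

(* Typing.  A typing environment assigns to the free name i the type    *)
(* onth G i (None = not in the domain).                                 *)
Inductive typed_tm : seq ty -> tm -> Prop :=
| T_Out G x z zs A As :
    onth G x = Some (TCh A As) ->
    map (onth G) (z :: zs) = map Some (A :: As) ->
    typed_tm G (Out x z zs)
| T_Par G M1 M2 : typed_tm G M1 -> typed_tm G M2 -> typed_tm G (Par M1 M2).

Inductive typed : seq ty -> decl -> Prop :=
| T_New G A D : typed (A :: G) D -> typed G (DNew D)
| T_Def G r n A As B D :
    size As = n ->
    typed (A :: As ++ G) B ->
    typed (TCh A As :: G) D ->
    typed G (DDef r n B D)
| T_Tm G M : typed_tm G M -> typed G (DTm M).

Definition diverges (D : decl) : Prop :=
  exists f : nat -> decl, f 0 = D /\ forall k, red (f k) (f k.+1).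

(* Main.v *)
Require Import Defs.
From mathcomp Require Import ssreflect ssrfun ssrbool eqtype ssrnat seq.
From Stdlib Require Import FunctionalExtensionality ClassicalEpsilon Eqdep.

Set Implicit Arguments.
Unset Strict Implicit.
Unset Printing Implicit Defensive.

Fixpoint prodT (F : ty -> Type) (l : seq ty) : Type :=
  match l with [::] => unit | B :: l' => (F B * prodT F l')%type end.

Fixpoint sem (T : ty) : Type :=
  match T with
  | TOne => unit
  | TCh A As => (sem A * prodT sem As)%type -> nat
  end.

Definition dyn := {T : ty & sem T}.
Definition env := nat -> option dyn.

Fixpoint args_of (l : seq ty) : prodT sem l -> seq (option dyn) :=
  match l return prodT sem l -> seq (option dyn) with
  | [::] => fun _ => [::]
  | B :: l' => fun p => Some (existT sem B p.1) :: args_of p.2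
  end.

Definition scons (o : option dyn) (r : env) : env :=
  fun i => if i is k.+1 then r k else o.

Definition cat_env (s : seq (option dyn)) (r : env) : env :=
  fun i => if i < size s then nth None s i else r (i - size s).

Fixpoint dflt (T : ty) : sem T :=
  match T with TOne => tt | TCh A As => fun _ => 0 end.

Inductive costM : env -> tm -> nat -> Prop :=
| CM_Out r x z zs A As (f : sem (TCh A As)) (a : prodT sem (A :: As)) :
    r x = Some (existT sem (TCh A As) f) ->
    map r (z :: zs) = args_of a ->
    costM r (Out x z zs) (f a)
| CM_Par r M1 M2 k1 k2 :
    costM r M1 k1 -> costM r M2 k2 -> costM r (Par M1 M2) (k1 + k2).

Inductive costD : env -> decl -> nat -> Prop :=
| CD_New r o D k : costD (scons o r) D k -> costD r (DNew D) k
| CD_Def r rp n A As (f : sem (TCh A As)) B D k :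
    size As = n ->
    (forall a : prodT sem (A :: As),
        exists c, costD (cat_env (args_of a) r) B c /\ c < f a) ->
    costD (scons (Some (existT sem (TCh A As) f)) r) D k ->
    costD r (DDef rp n B D) k
| CD_Dead r rp n B D k : costD (scons None r) D k -> costD r (DDef rp n B D) k
| CD_Tm r M k : costM r M k -> costD r (DTm M) k.

Lemma size_args l (p : prodT sem l) : size (args_of p) = size l.
Proof. by elim: l p => [|B l IH] //= [x p] /=; rewrite IH. Qed.

Lemma upnE k f i : upn k f i = if i < k then i else f (i - k) + k.
Proof.
elim: k i => [|k IH] i; first by rewrite /= subn0 addn0.
case: i => [|i] //=.
rewrite /up -/(upn k f) IH ltnS; case: ifP => // _; by rewrite subSS addnS.
Qed.

Lemma cat_env_upn s r f :
  (fun i => cat_env s r (upn (size s) f i)) = cat_env s (fun i => r (f i)).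
Proof.
apply: functional_extensionality => i; rewrite upnE /cat_env.
case: (ltnP i (size s)) => h; first by rewrite h.
by rewrite ltnNge leq_addl /= addnK.
Qed.

Lemma scons_up o r f :
  (fun i => scons o r (up f i)) = scons o (fun i => r (f i)).
Proof. by apply: functional_extensionality => -[|i]. Qed.

Lemma costM_ren f M : forall r k, costM r (ren_tm f M) k <-> costM (fun i => r (f i)) M k.
Proof.
elim: M => [x z zs|M1 IH1 M2 IH2] r k /=; split => H; inversion H; subst.
- econstructor; first exact H5. by rewrite -H6 /= -map_comp.
- econstructor; first exact H5. by rewrite -H6 /= -map_comp.
- by apply: CM_Par; [apply/IH1|apply/IH2].
- by apply: CM_Par; [apply/IH1|apply/IH2].
Qed.

Definition defok (r : env) (n : nat) (B : decl) (o : option dyn) : Prop :=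
  o = None \/
  exists A As (f : sem (TCh A As)), o = Some (existT sem (TCh A As) f) /\
    size As = n /\
    forall a : prodT sem (A :: As),
      exists c, costD (cat_env (args_of a) r) B c /\ c < f a.

Lemma costD_NewE r D k : costD r (DNew D) k <-> exists o, costD (scons o r) D k.
Proof.
split; first by move=> H; inversion H; subst; eauto.
by case=> o H; apply: CD_New H.
Qed.

Lemma costD_DefE r rp n B D k :
  costD r (DDef rp n B D) k <-> exists o, defok r n B o /\ costD (scons o r) D k.
Proof.
split.
  move=> H; inversion H; subst.
  - by exists (Some (existT sem (TCh A As) f)); split=> //; right; exists A, As, f.
  - by exists None; split=> //; left.
case=> o [[->|[A [As [f [-> [hs hb]]]]]] H].
  by apply: CD_Dead.
by apply: CD_Def H.
Qed.

Lemma costD_TmE r M k : costD r (DTm M) k <-> costM r M k.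
Proof. by split => H; [inversion H|constructor]. Qed.

Lemma defok_ren n B :
  (forall f r k, costD r (ren_decl f B) k <-> costD (fun i => r (f i)) B k) ->
  forall f r o, defok r n (ren_decl (upn n.+1 f) B) o <-> defok (fun i => r (f i)) n B o.
Proof.
move=> IH f r o; rewrite /defok; split=> -[->|[A [As [g [-> [hs hb]]]]]]; auto; right;
  exists A, As, g; do 2 split=> //; move=> a; case: (hb a) => c [hc lt]; exists c; split=> //.
- have e : n.+1 = size (args_of a) by rewrite size_args /= hs.
  by move: hc; rewrite IH e cat_env_upn.
- have e : n.+1 = size (args_of a) by rewrite size_args /= hs.
  by rewrite IH e cat_env_upn.
Qed.

Lemma costD_ren D : forall f r k, costD r (ren_decl f D) k <-> costD (fun i => r (f i)) D k.
Proof.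
elim: D => [D IH|rp n B IHB D IH|M] f r k /=.
- rewrite !costD_NewE; split=> -[o H]; exists o.
    by move: H; rewrite IH scons_up.
  by rewrite IH scons_up.
- rewrite !costD_DefE; split=> -[o [H1 H2]]; exists o.
    by move: H1 H2; rewrite defok_ren // IH scons_up.
  by move: H1 H2; rewrite -defok_ren // IH scons_up.
- by rewrite !costD_TmE costM_ren.
Qed.

Lemma costM_shift o r M k : costM (scons o r) (ren_tm succn M) k <-> costM r M k.
Proof. by rewrite costM_ren. Qed.

Lemma costM_ParE r M1 M2 k :
  costM r (Par M1 M2) k <-> exists k1 k2, costM r M1 k1 /\ costM r M2 k2 /\ k = k1 + k2.
Proof.
split; first by move=> H; inversion H; subst; eauto.
by case=> k1 [k2 [h1 [h2 ->]]]; apply: CM_Par.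
Qed.

Lemma costD_parl D : forall r M k,
  costD r (par_l D M) k <-> exists k1 k2, costD r D k1 /\ costM r M k2 /\ k = k1 + k2.
Proof.
elim: D => [D IH|rp n B _ D IH|M'] r M k /=.
- rewrite costD_NewE; split.
    case=> o; rewrite IH => -[k1 [k2 [h1 [h2 ->]]]].
    exists k1, k2; split; last by move: h2; rewrite costM_shift.
    by apply/costD_NewE; exists o.
  case=> k1 [k2 [/costD_NewE [o h1] [h2 ->]]]; exists o; rewrite IH.
  by exists k1, k2; rewrite costM_shift.
- rewrite costD_DefE; split.
    case=> o [hd]; rewrite IH => -[k1 [k2 [h1 [h2 ->]]]].
    exists k1, k2; split; last by move: h2; rewrite costM_shift.
    by apply/costD_DefE; exists o.
  case=> k1 [k2 [/costD_DefE [o [hd h1]] [h2 ->]]]; exists o; split=> //; rewrite IH.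
  by exists k1, k2; rewrite costM_shift.
- rewrite costD_TmE costM_ParE; split.
    by case=> k1 [k2 [h1 [h2 ->]]]; exists k1, k2; rewrite costD_TmE.
  by case=> k1 [k2 [/costD_TmE h1 [h2 ->]]]; exists k1, k2.
Qed.

Lemma costD_parr D : forall r M k,
  costD r (par_r M D) k <-> exists k1 k2, costD r D k1 /\ costM r M k2 /\ k = k1 + k2.
Proof.
elim: D => [D IH|rp n B _ D IH|M'] r M k /=.
- rewrite costD_NewE; split.
    case=> o; rewrite IH => -[k1 [k2 [h1 [h2 ->]]]].
    exists k1, k2; split; last by move: h2; rewrite costM_shift.
    by apply/costD_NewE; exists o.
  case=> k1 [k2 [/costD_NewE [o h1] [h2 ->]]]; exists o; rewrite IH.
  by exists k1, k2; rewrite costM_shift.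
- rewrite costD_DefE; split.
    case=> o [hd]; rewrite IH => -[k1 [k2 [h1 [h2 ->]]]].
    exists k1, k2; split; last by move: h2; rewrite costM_shift.
    by apply/costD_DefE; exists o.
  case=> k1 [k2 [/costD_DefE [o [hd h1]] [h2 ->]]]; exists o; split=> //; rewrite IH.
  by exists k1, k2; rewrite costM_shift.
- rewrite costD_TmE costM_ParE; split.
    by case=> k1 [k2 [h1 [h2 ->]]]; exists k2, k1; rewrite costD_TmE addnC.
  by case=> k1 [k2 [/costD_TmE h1 [h2 ->]]]; exists k2, k1; rewrite addnC.
Qed.

Definition bok (r : env) (b : binder) (o : option dyn) : Prop :=
  match b with BNew => True | BDef rp n B => defok r n B o end.

Lemma costD_bind r b D k :
  costD r (bind b D) k <-> exists o, bok r b o /\ costD (scons o r) D k.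
Proof.
case: b => [|rp n B] /=; last by rewrite costD_DefE.
rewrite costD_NewE; split; case=> o h; first by exists o.
by case: h => _ h; exists o.
Qed.

Lemma bok_shift r o' b o : bok (scons o' r) (ren_binder succn b) o <-> bok r b o.
Proof.
case: b => [|rp n B] //=.
by rewrite defok_ren //; move=> f r0 k; apply: costD_ren.
Qed.

Lemma bok_None r b : bok r b None.
Proof. by case: b => //= *; left. Qed.

Lemma swap_env o1 o2 r :
  (fun i => scons o1 (scons o2 r) (swap01 i)) = scons o2 (scons o1 r).
Proof. by apply: functional_extensionality => -[|[|i]]. Qed.

Lemma scong_cost D1 D2 : scong D1 D2 -> forall r k, costD r D1 k <-> costD r D2 k.
Proof.
elim=> {D1 D2}.
- by [].
- by move=> D1 D2 _ IH r k; rewrite IH.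
- by move=> D1 D2 D3 _ IH1 _ IH2 r k; rewrite IH1 IH2.
- move=> b1 b2 D r k; rewrite !costD_bind; split.
    case=> o1 [h1]; rewrite costD_bind => -[o2 [h2 h]].
    exists o2; split; first by move: h2; rewrite bok_shift.
    apply/costD_bind; exists o1; split; first by rewrite bok_shift.
    by rewrite costD_ren swap_env.
  case=> o2 [h2]; rewrite costD_bind => -[o1 [h1 h]].
  exists o1; split; first by move: h1; rewrite bok_shift.
  apply/costD_bind; exists o2; split; first by rewrite bok_shift.
  by move: h; rewrite costD_ren swap_env.
- move=> b D r k; rewrite costD_bind; split.
    by case=> o [_]; rewrite costD_ren.
  by move=> h; exists None; split; [apply: bok_None|rewrite costD_ren].
- by move=> D1 D2 _ IH r k; rewrite !costD_NewE; split=> -[o h]; exists o; move: h; rewrite IH.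
- move=> rp n B1 B2 D _ IH r k; rewrite !costD_DefE; split=> -[o [h1 h2]]; exists o; split=> //;
    move: h1; rewrite /defok => -[->|[A [As [f [-> [hs hb]]]]]]; auto; right;
    exists A, As, f; do 2 split=> //; move=> a; case: (hb a) => c [hc lt]; exists c;
    by rewrite ?IH in hc *.
- by move=> rp n B D1 D2 _ IH r k; rewrite !costD_DefE; split=> -[o [h1 h2]]; exists o; move: h2; rewrite IH.
- move=> D1 D2 M _ IH r k; rewrite !costD_parl; split=> -[k1 [k2 [h1 h2]]]; exists k1, k2;
    by move: h1; rewrite IH.
- move=> M D1 D2 _ IH r k; rewrite !costD_parr; split=> -[k1 [k2 [h1 h2]]]; exists k1, k2;
    by move: h1; rewrite IH.
Qed.

Inductive ccost : env -> ectx -> env -> nat -> Prop :=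
| CC_nil r : ccost r [::] r 0
| CC_New r o E r' k : ccost (scons o r) E r' k -> ccost r (LNew :: E) r' k
| CC_Def r rp n B o E r' k :
    defok r n B o -> ccost (scons o r) E r' k -> ccost r (LDef rp n B :: E) r' k
| CC_ParL r M E r' k1 k2 :
    costM r M k2 -> ccost r E r' k1 -> ccost r (LParL M :: E) r' (k1 + k2)
| CC_ParR r M E r' k1 k2 :
    costM r M k2 -> ccost r E r' k1 -> ccost r (LParR M :: E) r' (k1 + k2).

Lemma plug_cost E : forall r X k,
  costD r (plug E X) k <->
  exists r' k1 k2, ccost r E r' k1 /\ costD r' X k2 /\ k = k1 + k2.
Proof.
elim: E => [|l E IH] r X k /=.
  split; first by move=> h; exists r, 0, k; split=> //; constructor.
  by case=> r' [k1 [k2 [h1 [h2 ->]]]]; inversion h1; subst.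
case: l => [|rp n B|M|M] /=.
- rewrite costD_NewE; split.
    case=> o; rewrite IH => -[r' [k1 [k2 [h1 [h2 ->]]]]].
    by exists r', k1, k2; split=> //; apply: CC_New h1.
  case=> r' [k1 [k2 [h1 [h2 ->]]]]; inversion h1; subst.
  by exists o; rewrite IH; exists r', k1, k2.
- rewrite costD_DefE; split.
    case=> o [hd]; rewrite IH => -[r' [k1 [k2 [h1 [h2 ->]]]]].
    by exists r', k1, k2; split=> //; econstructor; eauto.
  case=> r' [k1 [k2 [h1 [h2 ->]]]]; inversion h1; subst.
  by exists o; split=> //; rewrite IH; exists r', k1, k2.
- rewrite costD_parl; split.
    case=> ka [kb [ha [hb ->]]]; move: ha; rewrite IH => -[r' [k1 [k2 [h1 [h2 ->]]]]].
    exists r', (k1 + kb), k2; split; first by constructor.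
    by split=> //; rewrite addnAC.
  case=> r' [k1 [k2 [h1 [h2 ->]]]]; inversion h1; subst.
  exists (k0 + k2), k3; split; last by split=> //; rewrite addnAC.
  by rewrite IH; exists r', k0, k2.
- rewrite costD_parr; split.
    case=> ka [kb [ha [hb ->]]]; move: ha; rewrite IH => -[r' [k1 [k2 [h1 [h2 ->]]]]].
    exists r', (k1 + kb), k2; split; first by constructor.
    by split=> //; rewrite addnAC.
  case=> r' [k1 [k2 [h1 [h2 ->]]]]; inversion h1; subst.
  exists (k0 + k2), k3; split; last by split=> //; rewrite addnAC.
  by rewrite IH; exists r', k0, k2.
Qed.

Lemma ccost_depth r E r' k : ccost r E r' k -> forall i, r' (depth E + i) = r i.
Proof.
elim=> {r E r' k} //=.
- by move=> r o E r' k _ IH i; rewrite addSnnS IH.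
- by move=> r rp n B o E r' k _ _ IH i; rewrite addSnnS IH.
Qed.

Lemma fire_core r1 o E' r2 k3 n B z zs k4 :
  size zs = n ->
  defok r1 n B o ->
  ccost (scons o r1) E' r2 k3 ->
  costM r2 (Out (depth E') z zs) k4 ->
  exists c, costD r2 (inst n B (depth E') (z :: zs)) c /\ c < k4.
Proof.
move=> hzs hd hc hm; inversion hm; subst.
have e0 : r2 (depth E' + 0) = o by rewrite (ccost_depth hc).
rewrite addn0 H4 in e0.
case: hd => [eo|[A' [As' [f' [eo [hs hb]]]]]]; rewrite -e0 in eo; first by [].
have e := f_equal (odflt (existT sem TOne tt)) eo; rewrite /= in e.
have := f_equal (@projT1 _ _) e; case=> eA eAs; subst A' As'.
have ef := inj_pair2 _ _ _ _ _ e; subst f'.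
case: (hb a) => c [hcB lt]; exists c; split=> //.
rewrite /inst costD_ren.
suff -> : (fun i => r2 (if i < (size zs).+1 then nth 0 (z :: zs) i else i - (size zs).+1 + (depth E').+1))
          = cat_env (args_of a) r1 by [].
apply: functional_extensionality => i.
have sa : size (args_of a) = (size zs).+1 by rewrite size_args /= hs.
rewrite /cat_env sa; case: ifP => hi.
  by rewrite -H5 (nth_map 0) //= hi.
have -> : i - (size zs).+1 + (depth E').+1 = depth E' + (i - (size zs).+1).+1 by rewrite addnC addnS addSn.
by rewrite (ccost_depth hc).
Qed.

Lemma step_cost D1 D2 : step D1 D2 -> forall r k, costD r D1 k -> exists k', costD r D2 k' /\ k' < k.
Proof.
case=> E E' n B z zs hzs r k; rewrite !plug_cost => -[r1 [k1 [k2 [hE [hD ->]]]]].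
- move: hD; rewrite costD_DefE => -[o [hd]]; rewrite plug_cost => -[r2 [k3 [k4 [hE' [hT ->]]]]].
  move: hT; rewrite costD_TmE => hm.
  case: (fire_core hzs hd hE' hm) => c [hc lt].
  exists (k1 + (k3 + c)); split; last by rewrite ltn_add2l ltn_add2l.
  apply/plug_cost; exists r1, k1, (k3 + c); split=> //; split=> //.
  apply/costD_DefE; exists o; split=> //; apply/plug_cost; by exists r2, k3, c.
- move: hD; rewrite costD_DefE => -[o [hd]]; rewrite plug_cost => -[r2 [k3 [k4 [hE' [hT ->]]]]].
  move: hT; rewrite costD_TmE => hm.
  case: (fire_core hzs hd hE' hm) => c [hc lt].
  exists (k1 + (k3 + c)); split; last by rewrite ltn_add2l ltn_add2l.
  apply/plug_cost; exists r1, k1, (k3 + c); split=> //; split=> //.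
  apply/costD_NewE; exists o; apply/plug_cost; by exists r2, k3, c.
Qed.

Definition realizes (G : seq ty) (r : env) :=
  forall i T, onth G i = Some T -> exists v, r i = Some (existT sem T v).

Lemma args_realize G r : realizes G r ->
  forall (l : seq nat) Ts, map (onth G) l = map Some Ts ->
  exists p : prodT sem Ts, map r l = args_of p.
Proof.
move=> hr; elim=> [|x l IH] [|T Ts] //=; try by move=> _; exists tt.
case=> hx /IH [p hp]; case: (hr _ _ hx) => v hv.
by exists (v, p); rewrite /= hv hp.
Qed.

Lemma nth_args Ts (p : prodT sem Ts) i T :
  onth Ts i = Some T -> exists v, nth None (args_of p) i = Some (existT sem T v).
Proof.
elim: Ts p i => [|B Ts IH] p i; first by case: i.
case: p => x p; case: i => [|i] /=.
  by case=> <-; exists x.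
exact: IH.
Qed.

Lemma realize_cat G r Ts (p : prodT sem Ts) :
  realizes G r -> realizes (Ts ++ G) (cat_env (args_of p) r).
Proof.
move=> hr i T; rewrite onth_cat /cat_env size_args; case: ifP => _.
  exact: nth_args.
exact: hr.
Qed.

Lemma realize_cons G r T v : realizes G r -> realizes (T :: G) (scons (Some (existT sem T v)) r).
Proof. by move=> hr [|i] U /=; [case=> <-; exists v|apply: hr]. Qed.

Lemma fund_tm G M : typed_tm G M -> forall r, realizes G r -> exists k, costM r M k.
Proof.
elim=> {G M}.
- move=> G x z zs A As hx hargs r hr.
  case: (hr _ _ hx) => f hf.
  case: (args_realize hr hargs) => a ha.
  by exists (f a); econstructor; eauto.
- move=> G M1 M2 _ IH1 _ IH2 r hr.
  case: (IH1 r hr) => k1 h1; case: (IH2 r hr) => k2 h2.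
  by exists (k1 + k2); constructor.
Qed.

Lemma fund G D : typed G D -> forall r, realizes G r -> exists k, costD r D k.
Proof.
elim=> {G D}.
- move=> G A D _ IH r hr.
  case: (IH _ (realize_cons (dflt A) hr)) => k hk.
  by exists k; apply: CD_New hk.
- move=> G rp n A As B D hs _ IHB _ IHD r hr.
  have H : forall a : prodT sem (A :: As),
      exists c, costD (cat_env (args_of a) r) B c.
    by move=> a; apply: IHB; exact: (@realize_cat G r (A :: As) a hr).
  pose f : sem (TCh A As) :=
    fun a => (proj1_sig (constructive_indefinite_description _ (H a))).+1.
  case: (IHD _ (realize_cons f hr)) => k hk.
  exists k; apply: (@CD_Def r rp n A As f B D k) => // a.
  exists (proj1_sig (constructive_indefinite_description _ (H a))); split=> //.
  exact: proj2_sig (constructive_indefinite_description _ (H a)).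
- move=> G M hM r hr; case: (fund_tm hM hr) => k hk.
  by exists k; constructor.
Qed.

Theorem corollary3 (G : seq ty) (D : decl) :
  typed G D ->
  ~ (exists f : nat -> decl, f 0 = D /\ forall k, red (f k) (f k.+1)).
Proof.
move=> hT [f [f0 hf]].
pose r : env := fun i =>
  match onth G i with Some T => Some (existT sem T (dflt T)) | None => None end.
have hr : realizes G r by move=> i T hi; exists (dflt T); rewrite /r hi.
case: (fund hT hr) => k0 hk0.
have key : forall m, exists k, costD r (f m) k /\ k + m <= k0.
  elim=> [|m [k [hk le]]]; first by exists k0; rewrite f0 addn0.
  case: (hf m) => D1 [D2 [s1 [st s2]]].
  move: hk; rewrite (scong_cost s1) => hk.
  case: (step_cost st hk) => k' [hk' lt].
  exists k'; split; first by rewrite -(scong_cost s2).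
  by rewrite addnS; apply: leq_trans le; rewrite ltn_add2r.
case: (key k0.+1) => k [_ le].
by move: le; rewrite addnS ltnNge leq_addl.
Qed.
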